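(* Let $S$ be a finite-dimensional system with Hamiltonian $H_S$ and state $\rho$. Then $$F_{H_S}(\rho)=\min_{\Phi_\rho,H_A}F_{H_{\rm tot}}(\Phi_\rho)=4\min_{\Phi_\rho,H_A}V_{H_{\rm tot}}(\Phi_\rho),$$ where the minimum is over all auxiliary systems $A$ with Hamiltonian $H_A$ and all pure states $|\Phi_\rho\rangle_{SA}$ with $\mathrm{Tr}_A|\Phi_\rho\rangle\langle\Phi_\rho|=\rho$, and $H_{\rm tot}=H_S\otimes I_A+I_S\otimes H_A$; in particular the minimum is attained.
   Context: Quantum Fisher information (QFI): for a state $\rho=\sum_j p_j|\psi_j\rangle\langle\psi_j|$ (spectral decomposition) and Hermitian $H$, $F_H(\rho)=2\sum_{j,k:\,p_j+p_k>0}\frac{(p_j-p_k)^2}{p_j+p_k}|\langle\psi_j|H|\psi_k\rangle|^2$. For a pure state $F_H(\psi)=4V_H(\psi)$ where $V_H(\psi)=\langle\psi|H^2|\psi\rangle-\langle\psi|H|\psi\rangle^2$. *)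

(* Defs.v *)
From HB Require Import structures.
From mathcomp Require Import all_boot all_order all_algebra.
Set Implicit Arguments. Unset Strict Implicit. Unset Printing Implicit Defensive.
Import Order.TTheory GRing.Theory Num.Theory.
Local Open Scope ring_scope.
Local Open Scope sesquilinear_scope.

Section QI.
Variable C : numClosedFieldType.

Definition dag {m n} (M : 'M[C]_(m, n)) : 'M[C]_(n, m) := M ^t*.

Definition hermitian_op {n} (M : 'M[C]_n) : Prop := M \is hermsymmx.

Definition density {n} (rho : 'M[C]_n) : Prop :=
  [/\ rho \is hermsymmx,
      (forall v : 'cV[C]_n, 0 <= (dag v *m rho *m v) 0 0)
    & \tr rho = 1].

(* Quantum Fisher information, computed from the spectral decomposition
   rho = P^dagger diag(p) P supplied by the library (spectralmx /
   spectral_diag); the eigenvectors are |psi_j> = (row j of P)^dagger, so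
   <psi_j|H|psi_k> = (P H P^dagger)_{jk}. *)
Definition qfi {n} (H rho : 'M[C]_n) : C :=
  let P := spectralmx rho in
  let p := spectral_diag rho in
  let Hp := P *m H *m dag P in
  2 * \sum_(j < n) \sum_(k < n | 0 < p 0 j + p 0 k)
        (p 0 j - p 0 k) ^+ 2 / (p 0 j + p 0 k) * `|Hp j k| ^+ 2.

Definition ket_normalized {N} (phi : 'cV[C]_N) : Prop := (dag phi *m phi) 0 0 = 1.

Definition proj {N} (phi : 'cV[C]_N) : 'M[C]_N := phi *m dag phi.

Definition expect {N} (H : 'M[C]_N) (phi : 'cV[C]_N) : C := (dag phi *m H *m phi) 0 0.

Definition variance {N} (H : 'M[C]_N) (phi : 'cV[C]_N) : C :=
  expect (H *m H) phi - expect H phi ^+ 2.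

(* Tensor product C^n (x) C^m = C^(n*m), with basis index
   mxvec_index i a <-> |i>_S |a>_A. *)
Definition idx_pair {n m} (k : 'I_(n * m)) : 'I_n * 'I_m :=
  enum_val (cast_ord (esym (mxvec_cast n m)) k).

Definition kron {n m} (A : 'M[C]_n) (B : 'M[C]_m) : 'M[C]_(n * m) :=
  \matrix_(k, l) (A (idx_pair k).1 (idx_pair l).1 * B (idx_pair k).2 (idx_pair l).2).

Definition Htot {n m} (HS : 'M[C]_n) (HA : 'M[C]_m) : 'M[C]_(n * m) :=
  kron HS 1%:M + kron 1%:M HA.

Definition ptraceA {n m} (M : 'M[C]_(n * m)) : 'M[C]_n :=
  \matrix_(i, j) \sum_(a < m) M (mxvec_index i a) (mxvec_index j a).

Definition purification {n m} (rho : 'M[C]_n) (phi : 'cV[C]_(n * m)) : Prop :=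
  ket_normalized phi /\ ptraceA (proj phi) = rho.

End QI.

(* Main.v *)
Require Import Defs.
From HB Require Import structures.
From mathcomp Require Import all_boot all_order all_algebra.
From mathcomp Require Import ring lra.
Set Implicit Arguments. Unset Strict Implicit. Unset Printing Implicit Defensive.
Import Order.TTheory GRing.Theory Num.Theory Num.Def.
Local Open Scope ring_scope.
Local Open Scope sesquilinear_scope.

Section H.
Variable C : numClosedFieldType.
Implicit Types (x y : C).

Lemma adjM m n p (A : 'M[C]_(m, n)) (B : 'M[C]_(n, p)) :
  (A *m B)^t* = B^t* *m A^t*.
Proof. by rewrite trmx_mul map_mxM. Qed.

Lemma adjD m n (A B : 'M[C]_(m, n)) : (A + B)^t* = A^t* + B^t*.
Proof. by apply/matrixP=> i j; rewrite !mxE rmorphD. Qed.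

Lemma adjE m n (A : 'M[C]_(m, n)) i j : A^t* i j = (A j i)^*.
Proof. by rewrite !mxE. Qed.

Lemma adj_diag n (d : 'rV[C]_n) : (diag_mx d)^t* = diag_mx (map_mx conjC d).
Proof. by rewrite tr_diag_mx map_diag_mx. Qed.

Lemma unitary_l n (P : 'M[C]_n) : P \is unitarymx -> P *m P^t* = 1%:M.
Proof. by move/unitarymxP. Qed.

Lemma unitary_r n (P : 'M[C]_n) : P \is unitarymx -> P^t* *m P = 1%:M.
Proof. by move=> U; have := mulmxKtV (1%:M : 'M[C]_n) U erefl; rewrite mul1mx. Qed.

Lemma herm_adj n (H : 'M[C]_n) : H \is hermsymmx -> H^t* = H.
Proof. by move/is_hermitianmxP; rewrite expr0 scale1r => <-. Qed.

Lemma adj_herm n (H : 'M[C]_n) : H^t* = H -> H \is hermsymmx.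
Proof. by move=> h; apply/is_hermitianmxP; rewrite expr0 scale1r h. Qed.

Lemma herm_entry n (H : 'M[C]_n) : H \is hermsymmx -> forall i j, (H i j)^* = H j i.
Proof. by move=> /herm_adj h i j; rewrite -[in RHS]h mxE mxE. Qed.

Lemma idx_pairK n m i a : idx_pair (mxvec_index i a : 'I_(n * m)) = (i, a).
Proof. by rewrite /idx_pair /mxvec_index cast_ordK enum_rankK. Qed.

Lemma sum_mxvec n m (F : 'I_(n * m) -> C) :
  \sum_k F k = \sum_i \sum_a F (mxvec_index i a).
Proof.
rewrite (reindex (uncurry (@mxvec_index n m))) /=; last first.
  exists (@idx_pair n m) => [[i a] _|k _] /=; first by rewrite idx_pairK.
  by case/mxvec_indexP: k => i a; rewrite idx_pairK.
by rewrite pair_big /=; apply: eq_bigr => -[i a].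
Qed.

Lemma kronE n m (A : 'M[C]_n) (B : 'M[C]_m) i a j b :
  kron A B (mxvec_index i a) (mxvec_index j b) = A i j * B a b.
Proof. by rewrite mxE !idx_pairK. Qed.


Definition Mof n m (Phi : 'cV[C]_(n * m)) : 'M[C]_(n, m) :=
  \matrix_(i, a) Phi (mxvec_index i a) 0.

Lemma ptraceA_proj n m (Phi : 'cV[C]_(n * m)) :
  ptraceA (proj Phi) = Mof Phi *m (Mof Phi)^t*.
Proof.
apply/matrixP=> i j; rewrite !mxE; apply: eq_bigr => a _.
by rewrite !mxE big_ord1 !mxE.
Qed.

Lemma dotE n m (U V : 'cV[C]_(n * m)) :
  (U^t* *m V) 0 0 = \tr (Mof V *m (Mof U)^t*).
Proof.
rewrite mxE sum_mxvec /mxtrace; apply: eq_bigr => i _; rewrite mxE.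
by apply: eq_bigr => a _; rewrite !mxE mulrC.
Qed.

Lemma sum_delta m (a : 'I_m) (f : 'I_m -> C) :
  \sum_b (1%:M : 'M[C]_m) a b * f b = f a.
Proof.
rewrite (bigD1 a) //= big1 => [|b nb]; first by rewrite mxE eqxx mul1r addr0.
by rewrite mxE eq_sym (negbTE nb) mul0r.
Qed.

Lemma sum_delta' m (a : 'I_m) (f : 'I_m -> C) :
  \sum_b (1%:M : 'M[C]_m) b a * f b = f a.
Proof.
rewrite (bigD1 a) //= big1 => [|b nb]; first by rewrite mxE eqxx mul1r addr0.
by rewrite mxE (negbTE nb) mul0r.
Qed.

Lemma Mof_Htot n m (HS : 'M[C]_n) (HA : 'M[C]_m) (Phi : 'cV[C]_(n * m)) :
  Mof (Htot HS HA *m Phi) = HS *m Mof Phi + Mof Phi *m HA^T.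
Proof.
apply/matrixP=> i a; rewrite !mxE sum_mxvec.
rewrite /Htot.
have E : forall j b, (kron HS 1%:M + kron 1%:M HA) (mxvec_index i a) (mxvec_index j b) * Phi (mxvec_index j b) 0
   = HS i j * ((1%:M : 'M[C]_m) a b * Mof Phi j b) + (1%:M : 'M[C]_n) i j * (HA a b * Mof Phi j b).
  by move=> j b; rewrite mxE !kronE !mxE; ring.
under eq_bigr do under eq_bigr do rewrite E.
under eq_bigr do rewrite big_split /= -big_distrr /= sum_delta.
rewrite big_split /=; congr (_ + _).
rewrite exchange_big /=; apply: eq_bigr => b _.
by rewrite (sum_delta i (fun j => HA a b * Mof Phi j b)) [HA^T _ _]mxE mulrC.
Qed.

Lemma Htot_herm n m (HS : 'M[C]_n) (HA : 'M[C]_m) :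
  HS \is hermsymmx -> HA \is hermsymmx -> (Htot HS HA)^t* = Htot HS HA.
Proof.
move=> /herm_entry hS /herm_entry hA; apply/matrixP => k l.
case/mxvec_indexP: k => i a; case/mxvec_indexP: l => j b.
rewrite !mxE !idx_pairK /= rmorphD !rmorphM /= !conjC_nat hS hA.
by rewrite (eq_sym b a) (eq_sym j i).
Qed.

Lemma sum1 (I : finType) (j : I) (F : I -> C) :
  (forall k, k != j -> F k = 0) -> \sum_k F k = F j.
Proof. by move=> h; rewrite (bigD1 j) //= big1 ?addr0. Qed.

Lemma sqr_div (s : C) : s ^+ 2 / s = s.
Proof.
have [->|s0] := eqVneq s 0; first by rewrite expr0n mul0r.
by rewrite expr2 mulrK // unitfE.
Qed.

Lemma ge0_nlt0 (x : C) : 0 <= x -> ~~ (0 < x) -> x = 0.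
Proof. by rewrite lt_def => -> ; rewrite andbT negbK => /eqP. Qed.

Lemma cond_free n (p : 'rV[C]_n) (j : 'I_n) (F : 'I_n -> C) :
  (forall k, 0 <= p 0 j + p 0 k) ->
  (forall k, p 0 j + p 0 k = 0 -> F k = 0) ->
  \sum_(k | 0 < p 0 j + p 0 k) F k = \sum_k F k.
Proof.
move=> h0 hF; rewrite big_mkcond /=; apply: eq_bigr => k _.
by case: ifP => // /negbT /(ge0_nlt0 (h0 k)) /hF ->.
Qed.

Lemma spec_eq n (A : 'M[C]_n) : A \is normalmx ->
  A = (spectralmx A)^t* *m diag_mx (spectral_diag A) *m spectralmx A.
Proof.
by move/orthomx_spectralP => E; rewrite {1}E invmx_unitary // spectral_unitarymx.
Qed.

Lemma spec_conj n (A : 'M[C]_n) : A \is normalmx ->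
  spectralmx A *m A *m (spectralmx A)^t* = diag_mx (spectral_diag A).
Proof.
move=> /spec_eq E; have U := spectral_unitarymx A.
by rewrite {2}E !mulmxA unitary_l // mul1mx -mulmxA unitary_l // mulmx1.
Qed.

Lemma herm_normal n (A : 'M[C]_n) : A^t* = A -> A \is normalmx.
Proof. by move=> h; apply/normalmxP; rewrite h. Qed.

Lemma diag_tr n (q : 'rV[C]_n) (M : 'M[C]_n) :
  \tr (diag_mx q *m M) = \sum_j q 0 j * M j j.
Proof. by rewrite mul_diag_mx /mxtrace; apply: eq_bigr => j _; rewrite mxE. Qed.

Lemma qfi_pure N (H : 'M[C]_N) (phi : 'cV[C]_N) :
  H^t* = H -> (phi^t* *m phi) 0 0 = 1 -> qfi H (proj phi) = 4 * variance H phi.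
Proof.
move=> hH hn.
set A := proj phi.
have hA : A^t* = A by rewrite /A /proj /dag adjM trmxCK.
have nA := herm_normal hA.
have U := spectral_unitarymx A.
set Q := spectralmx A in U *.
set q := spectral_diag A.
have Ew : (Q *m phi) *m (Q *m phi)^t* = diag_mx q.
  by rewrite adjM !mulmxA -(spec_conj nA) /A /proj /dag !mulmxA.
set w := Q *m phi in Ew.
have ww : (w^t* *m w) 0 0 = 1.
  by rewrite /w adjM mulmxA -(mulmxA _ _ Q) unitary_r // mulmx1.
have qE : forall j, q 0 j = w j 0 * (w j 0)^*.
  move=> j; have := congr1 (fun X : 'M[C]_N => X j j) Ew.
  by rewrite /= !mxE big_ord1 eqxx mulr1n !mxE => <-.
have off : forall j k, j != k -> w j 0 * (w k 0)^* = 0.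
  move=> j k jk; have := congr1 (fun X : 'M[C]_N => X j k) Ew.
  by rewrite /= !mxE big_ord1 (negbTE jk) mulr0n !mxE.
have q0 : forall j, 0 <= q 0 j by move=> j; rewrite qE mul_conjC_ge0.
have qq : forall j k, j != k -> q 0 j * q 0 k = 0.
  move=> j k jk; rewrite !qE.
  have -> : w j 0 * (w j 0)^* * (w k 0 * (w k 0)^*) = (w j 0 * (w k 0)^*) * (w k 0 * (w j 0)^*) by ring.
  by rewrite off // mul0r.
have sq : \sum_j q 0 j = 1.
  by rewrite -ww mxE; apply: eq_bigr => j _; rewrite qE !mxE mulrC.
have qq2 : forall j, q 0 j * q 0 j = q 0 j.
  move=> j; rewrite -{3}(mulr1 (q 0 j)) -sq mulr_sumr (sum1 (j := j)) // => k kj.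
  by rewrite qq // eq_sym.
set Hq := Q *m H *m Q^t*.
have hHq : forall j k, (Hq j k)^* = Hq k j.
  apply: herm_entry; apply: adj_herm; by rewrite /Hq !adjM trmxCK hH mulmxA.
have UU : forall k (X : 'M[C]_(k, N)), X *m Q^t* *m Q = X.
  by move=> k X; rewrite -mulmxA unitary_r // mulmx1.
have trE : forall M, \tr (diag_mx q *m (Q *m M *m Q^t*)) = (phi^t* *m M *m phi) 0 0.
  move=> M; rewrite -Ew -[w *m w^t* *m _]mulmxA (mxtrace_mulC w) trace_mx11 /w adjM.
  by rewrite !mulmxA !UU.
have HH : Q *m (H *m H) *m Q^t* = Hq *m Hq.
  by rewrite /Hq !mulmxA UU.
pose X := \sum_j \sum_k q 0 j * `|Hq j k| ^+ 2.
pose Y := \sum_j q 0 j * `|Hq j j| ^+ 2.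
pose Z := \sum_j q 0 j * Hq j j.
have EX : expect (H *m H) phi = X.
  rewrite /expect /dag -trE HH diag_tr; apply: eq_bigr => j _; rewrite mxE mulr_sumr.
  by apply: eq_bigr => k _; rewrite normCK hHq.
have EZ : expect H phi = Z by rewrite /expect /dag -trE diag_tr.
have EY : Y = Z ^+ 2.
  rewrite expr2 /Z mulr_suml; apply: eq_bigr => j _.
  rewrite mulr_sumr (sum1 (j := j)) => [|k kj]; last by rewrite mulrACA qq ?mul0r // eq_sym.
  by rewrite mulrACA qq2 normCK hHq.
have step : forall j k, (q 0 j - q 0 k) ^+ 2 / (q 0 j + q 0 k) * `|Hq j k| ^+ 2
   = q 0 j * `|Hq j k| ^+ 2 + q 0 k * `|Hq j k| ^+ 2 - (1%:M : 'M[C]_N) j k * (2 * (q 0 k * `|Hq k k| ^+ 2)).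
  move=> j k; have [<-|jk] := eqVneq j k.
    by rewrite subrr expr0n /= mul0r mul0r [(1%:M : 'M[C]_N) _ _]mxE eqxx mulr1n; ring.
  rewrite [(1%:M : 'M[C]_N) _ _]mxE (negbTE jk) mulr0n mul0r subr0.
  have -> : (q 0 j - q 0 k) ^+ 2 = (q 0 j + q 0 k) ^+ 2 - 4 * (q 0 j * q 0 k) by ring.
  by rewrite qq // mulr0 subr0 sqr_div mulrDl.
rewrite /qfi /=.
under eq_bigr => j _.
  rewrite cond_free => [|k|k hz]; first last.
  - by rewrite hz invr0 mulr0 mul0r.
  - exact: addr_ge0.
  under eq_bigr do rewrite step.
  rewrite sumrB big_split /= sum_delta.
  over.
rewrite /= sumrB big_split /=.
have E2 : \sum_j \sum_k q 0 k * `|Hq j k| ^+ 2 = X.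
  rewrite exchange_big /=; apply: eq_bigr => j _; apply: eq_bigr => k _; by rewrite -hHq norm_conjC.
rewrite E2 -/X -mulr_sumr -/Y /variance EX EZ -EY; ring.
Qed.

Lemma pos_neq0 (x : C) : 0 <= x -> x != 0 -> 0 < x.
Proof. by move=> h1 h2; rewrite lt_def h2 h1. Qed.

Lemma eqle (x y : C) : x = y -> x <= y.
Proof. by move=> ->. Qed.

Lemma key_ineq (a b x y : C) : 0 < a -> 0 < b ->
  (x - y) * (x - y)^* / (a + b) <= x * x^* / a + y * y^* / b.
Proof.
move=> a0 b0; rewrite -subr_ge0.
have ca : a^* = a by rewrite geC0_conj // ltW.
have cb : b^* = b by rewrite geC0_conj // ltW.
have an : a != 0 by rewrite lt0r_neq0.
have bn : b != 0 by rewrite lt0r_neq0.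
have abn : a + b != 0 by rewrite lt0r_neq0 // addr_gt0.
have -> : x * x^* / a + y * y^* / b - (x - y) * (x - y)^* / (a + b)
   = (b * x + a * y) * (b * x + a * y)^* / (a * b * (a + b)).
  rewrite !rmorphD !rmorphN !rmorphM /= ca cb.
  by field; rewrite abn an bn.
by rewrite divr_ge0 // ?mul_conjC_ge0 // !mulr_ge0 // ltW // addr_gt0.
Qed.

Lemma pair_ineq (pj pk K g : C) : 0 <= pj -> 0 <= pk ->
  (pj = 0 -> g = 0) -> (pk = 0 -> g = 0) ->
  (pj - pk) ^+ 2 / (pj + pk) * `|K| ^+ 2 <=
  (K * pk + g) * (K * pk + g)^* / pk + (K^* * pj + g^*) * (K^* * pj + g^*)^* / pj.
Proof.
move=> j0 k0 gj gk.
have cj : pj^* = pj by rewrite geC0_conj.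
have ck : pk^* = pk by rewrite geC0_conj.
have [ej|nj] := eqVneq pj 0; have [ek|nk] := eqVneq pk 0.
- by rewrite ej ek subrr addr0 expr0n /= !mul0r !invr0 !mulr0 addr0.
- rewrite ej gj // invr0 mulr0 addr0 sub0r add0r sqrrN addr0 normCK.
  rewrite rmorphM /= ck; apply: eqle; by field.
- rewrite ek gk // invr0 mulr0 add0r subr0 addr0 rmorph0 addr0 normCK.
  rewrite rmorphM /= cj conjCK; apply: eqle; by field.
have pj0 : 0 < pj by apply: pos_neq0.
have pk0 : 0 < pk by apply: pos_neq0.
have -> : (K^* * pj + g^*) * (K^* * pj + g^*)^* = (K * pj + g) * (K * pj + g)^*.
  rewrite !rmorphD !rmorphM /= !conjCK cj; ring.
apply: le_trans (key_ineq _ _ pk0 pj0); rewrite addrC.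
have -> : K * pk + g - (K * pj + g) = K * (pk - pj) by ring.
rewrite rmorphM rmorphB /= cj ck normCK.
have h1 : pj + pk != 0 by rewrite lt0r_neq0 // addr_gt0.
have h2 : pk + pj != 0 by rewrite addrC.
by apply: eqle; field.
Qed.

Lemma cs_diag n (p a : 'I_n -> C) : (forall j, 0 <= p j) -> (forall j, (a j)^* = a j) ->
  (forall j, p j = 0 -> a j = 0) -> \sum_j p j = 1 ->
  (\sum_j a j) ^+ 2 <= \sum_j a j * (a j)^* / p j.
Proof.
move=> p0 ar az s1; set s := \sum_j a j.
have sr : s^* = s by rewrite /s rmorph_sum; apply: eq_bigr => j _; exact: ar.
rewrite -subr_ge0.
have -> : \sum_j a j * (a j)^* / p j - s ^+ 2 =
    \sum_j p j * ((a j / p j - s) * (a j / p j - s)^*).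
  have E : forall j, p j * ((a j / p j - s) * (a j / p j - s)^*) =
      a j * (a j)^* / p j - (a j * s + a j * s) + p j * (s * s).
    move=> j; have cp : (p j)^* = p j by rewrite geC0_conj.
    rewrite rmorphB rmorphM /= ar sr fmorphV /= cp.
    have [e|ne] := eqVneq (p j) 0; first by rewrite e az // !mul0r; ring.
    by field.
  under [RHS]eq_bigr do rewrite E.
  rewrite big_split /= sumrB big_split /= -!mulr_suml -/s s1 mul1r expr2; ring.
by apply: sumr_ge0 => j _; rewrite mulr_ge0 // mul_conjC_ge0.
Qed.

Lemma adjN m n (A : 'M[C]_(m, n)) : (- A)^t* = - A^t*.
Proof. by apply/matrixP=> i j; rewrite !mxE rmorphN. Qed.

Lemma tr_ge0 m n (X : 'M[C]_(m, n)) : 0 <= \tr (X *m X^t*).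
Proof.
apply: sumr_ge0 => i _; rewrite mxE; apply: sumr_ge0 => a _.
by rewrite !mxE mul_conjC_ge0.
Qed.

Lemma tr_mulE m n (X Y : 'M[C]_(m, n)) : \tr (X *m Y^t*) = \sum_i \sum_a X i a * (Y i a)^*.
Proof. by apply: eq_bigr => i _; rewrite mxE; apply: eq_bigr => a _; rewrite !mxE. Qed.

Lemma core_lower n m (N : 'M[C]_(n, m)) (K : 'M[C]_n) (G : 'M[C]_m) (p : 'rV[C]_n) :
  N *m N^t* = diag_mx p -> \sum_j p 0 j = 1 -> K^t* = K -> G^t* = G ->
  2 * \sum_j \sum_(k | 0 < p 0 j + p 0 k) (p 0 j - p 0 k) ^+ 2 / (p 0 j + p 0 k) * `|K j k| ^+ 2
   <= 4 * (\tr ((K *m N + N *m G) *m (K *m N + N *m G)^t*)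
           - \tr ((K *m N + N *m G) *m N^t*) ^+ 2).
Proof.
move=> hN s1 hK hG.
set R := K *m N + N *m G.
have pE : forall j, p 0 j = \sum_a N j a * (N j a)^*.
  move=> j; have := congr1 (fun X : 'M[C]_n => X j j) hN; rewrite /= !mxE eqxx mulr1n => <-.
  by apply: eq_bigr => a _; rewrite !mxE.
have p0 : forall j, 0 <= p 0 j.
  by move=> j; rewrite pE sumr_ge0 // => a _; rewrite mul_conjC_ge0.
have Nz : forall j, p 0 j = 0 -> row j N = 0.
  move=> j; rewrite pE => h; apply/rowP => a; rewrite !mxE; apply/eqP; rewrite -mul_conjC_eq0; apply/eqP.
  by apply: (psumr_eq0P _ h) => // b _; rewrite mul_conjC_ge0.
set g := N *m G *m N^t*.
have gc : forall j k, (g j k)^* = g k j.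
  apply: herm_entry; apply: adj_herm; by rewrite /g !adjM trmxCK hG mulmxA.
have gz : forall j k, p 0 j = 0 -> g j k = 0.
  move=> j k /Nz h; have -> : g j k = row j g 0 k by rewrite [row _ _ _ _]mxE.
  by rewrite /g !row_mul h !mul0mx mxE.
have gz' : forall j k, p 0 k = 0 -> g j k = 0.
  by move=> j k h; rewrite -gc gz // rmorph0.
have hKe := herm_entry (adj_herm hK).
set A := R *m N^t*.
have AE : forall j k, A j k = K j k * p 0 k + g j k.
  move=> j k; rewrite /A /R mulmxDl -mulmxA hN mxE mul_mx_diag.
  by rewrite mxE.
have Az : forall j k, p 0 k = 0 -> A j k = 0.
  by move=> j k h; rewrite AE h mulr0 add0r gz'.
set Cm := \matrix_(j, k) (A j k / p 0 k).
have CD : Cm *m diag_mx p = A.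
  apply/matrixP => j k; rewrite mul_mx_diag mxE.
  have [e|ne] := eqVneq (p 0 k) 0; first by rewrite e mulr0 Az.
  by rewrite /Cm mxE divfK.
set V := R - Cm *m N.
have VV : V *m V^t* = R *m R^t* - Cm *m A^t*.
  rewrite /V adjD adjN adjM mulmxDl mulmxDr mulmxDr mulNmx mulmxN mulmxN mulNmx opprK.
  rewrite !mulmxA -/A -[Cm *m N *m N^t*]mulmxA hN CD -[Cm *m N *m R^t*]mulmxA.
  have -> : N *m R^t* = A^t* by rewrite /A adjM trmxCK.
  by rewrite addrA addrAC subrK.
pose T j k := A j k * (A j k)^* / p 0 k.
have Bes : \sum_j \sum_k T j k <= \tr (R *m R^t*).
  rewrite -subr_ge0.
  have <- : \tr (V *m V^t*) = \tr (R *m R^t*) - \sum_j \sum_k T j k.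
    rewrite VV raddfB; congr (_ - _); apply: eq_bigr => j _; rewrite mxE.
    by apply: eq_bigr => k _; rewrite adjE /Cm [X in X * _]mxE /T mulrAC.
  exact: tr_ge0.
have pw : forall j k, (p 0 j - p 0 k) ^+ 2 / (p 0 j + p 0 k) * `|K j k| ^+ 2 <= T j k + T k j.
  move=> j k; rewrite /T !AE -(hKe j k) -(gc j k).
  apply: pair_ineq => //; [exact: gz | exact: gz'].
pose w j k := (p 0 j - p 0 k) ^+ 2 / (p 0 j + p 0 k) * `|K j k| ^+ 2.
have W1 : \sum_j \sum_(k | 0 < p 0 j + p 0 k) (p 0 j - p 0 k) ^+ 2 / (p 0 j + p 0 k) * `|K j k| ^+ 2
   = \sum_j \sum_k w j k.
  apply: eq_bigr => j _; rewrite cond_free // => [k|k hz]; first exact: addr_ge0.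
  by rewrite hz invr0 mulr0 mul0r.
rewrite W1.
have trA : \tr (R *m N^t*) = \sum_j A j j by [].
have CS : (\sum_j A j j) ^+ 2 <= \sum_j T j j.
  apply: cs_diag => // j.
  - by rewrite AE rmorphD rmorphM /= hKe gc geC0_conj.
  - by move=> h; apply: Az.
have S1 : \sum_j \sum_k w j k + 2 * (\sum_j A j j) ^+ 2 <= \sum_j \sum_k (T j k + T k j).
  rewrite -subr_ge0.
  have -> : \sum_j \sum_k (T j k + T k j) - (\sum_j \sum_k w j k + 2 * (\sum_j A j j) ^+ 2)
     = \sum_j \sum_k (T j k + T k j - w j k) - 2 * (\sum_j A j j) ^+ 2.
    by rewrite opprD addrA -sumrB; congr (_ - _); apply: eq_bigr => j _; rewrite sumrB.
  apply: le_trans (_ : 0 <= 2 * (\sum_j T j j) - 2 * (\sum_j A j j) ^+ 2) _.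
    by rewrite subr_ge0 ler_pM2l.
  rewrite lerD2r mulr_sumr; apply: ler_sum => j _.
  rewrite (bigD1 j) //= /w subrr expr0n /= !mul0r subr0 -[X in X <= _]addr0 mulr2n.
  rewrite addr0 mulrDl mul1r lerDl sumr_ge0 // => k _; rewrite subr_ge0; exact: pw.
have S2 : \sum_j \sum_k (T j k + T k j) = 2 * \sum_j \sum_k T j k.
  under eq_bigr do rewrite big_split /=.
  by rewrite big_split /= [X in _ + X]exchange_big /= mulr2n mulrDl mul1r.
rewrite -subr_ge0.
have -> : 4 * (\tr (R *m R^t*) - \tr (R *m N^t*) ^+ 2) - 2 * \sum_j \sum_k w j k
   = 4 * (\tr (R *m R^t*) - \sum_j \sum_k T j k)
     + 2 * (\sum_j \sum_k (T j k + T k j) - (\sum_j \sum_k w j k + 2 * (\sum_j A j j) ^+ 2)).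
  rewrite S2 trA; ring.
by rewrite addr_ge0 // mulr_ge0 // subr_ge0.
Qed.

Lemma tr_unitary n m (P : 'M[C]_n) (X Y : 'M[C]_(n, m)) : P \is unitarymx ->
  \tr ((P *m X) *m (P *m Y)^t*) = \tr (X *m Y^t*).
Proof.
by move=> U; rewrite adjM !mulmxA mxtrace_mulC !mulmxA unitary_r // mul1mx.
Qed.

Lemma var_eigen n m (HS : 'M[C]_n) (HA : 'M[C]_m) (P : 'M[C]_n) (Phi : 'cV[C]_(n * m)) :
  HS \is hermsymmx -> HA \is hermsymmx -> P \is unitarymx ->
  variance (Htot HS HA) Phi =
   \tr (((P *m HS *m P^t*) *m (P *m Mof Phi) + (P *m Mof Phi) *m HA^T) *m
        ((P *m HS *m P^t*) *m (P *m Mof Phi) + (P *m Mof Phi) *m HA^T)^t*)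
   - \tr (((P *m HS *m P^t*) *m (P *m Mof Phi) + (P *m Mof Phi) *m HA^T) *m (P *m Mof Phi)^t*) ^+ 2.
Proof.
move=> hS hA U.
have hH := Htot_herm hS hA.
set H := Htot HS HA in hH *.
have eR : (P *m HS *m P^t*) *m (P *m Mof Phi) + (P *m Mof Phi) *m HA^T
   = P *m (HS *m Mof Phi + Mof Phi *m HA^T).
  by rewrite mulmxDr !mulmxA -[P *m HS *m P^t* *m P]mulmxA unitary_r // mulmx1.
rewrite eR !tr_unitary // -Mof_Htot /variance /expect /dag.
congr (_ - _ ^+ 2).
  rewrite -dotE adjM hH !mulmxA.
  by [].
by rewrite -dotE mulmxA.
Qed.

Definition Gopt n (K : 'M[C]_n) (p s : 'rV[C]_n) : 'M[C]_n :=
  \matrix_(j, k) (- 2 * K j k * s 0 j * s 0 k / (p 0 j + p 0 k)).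

Lemma Gopt_herm n (K : 'M[C]_n) (p s : 'rV[C]_n) : K^t* = K ->
  (forall j, (s 0 j)^* = s 0 j) -> (forall j, (p 0 j)^* = p 0 j) ->
  (Gopt K p s)^T \is hermsymmx.
Proof.
move=> /adj_herm /herm_entry hK hs hp; apply: adj_herm; apply/matrixP => j k.
rewrite !mxE !rmorphM /= fmorphV /= rmorphD /= rmorphN /= hK hs hs hp hp.
rewrite rmorph_nat; congr (_ / _); last by rewrite addrC.
by rewrite mulrAC.
Qed.

Lemma attain n (K : 'M[C]_n) (p s : 'rV[C]_n) : K^t* = K ->
  (forall j, 0 <= p 0 j) -> (forall j, (s 0 j)^* = s 0 j) -> (forall j, s 0 j * s 0 j = p 0 j) ->
  2 * \sum_j \sum_(k | 0 < p 0 j + p 0 k) (p 0 j - p 0 k) ^+ 2 / (p 0 j + p 0 k) * `|K j k| ^+ 2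
   = 4 * (\tr ((K *m diag_mx s + diag_mx s *m Gopt K p s) *m (K *m diag_mx s + diag_mx s *m Gopt K p s)^t*)
           - \tr ((K *m diag_mx s + diag_mx s *m Gopt K p s) *m (diag_mx s)^t*) ^+ 2).
Proof.
move=> hK p0 hs sp.
have hKe := herm_entry (adj_herm hK).
set R := K *m diag_mx s + diag_mx s *m Gopt K p s.
have RE : forall j k, R j k = K j k * s 0 k + s 0 j * (- 2 * K j k * s 0 j * s 0 k / (p 0 j + p 0 k)).
  by move=> j k; rewrite /R mxE mul_mx_diag mul_diag_mx !mxE.
have hp : forall j, (p 0 j)^* = p 0 j by move=> j; rewrite geC0_conj.
have sz : forall j, p 0 j = 0 -> s 0 j = 0.
  move=> j h; apply/eqP; have : s 0 j * s 0 j == 0 by rewrite sp h.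
  by rewrite mulf_eq0 orbb.
have pz : forall j k, p 0 j + p 0 k = 0 -> p 0 j = 0 /\ p 0 k = 0.
  move=> j k h; have := h; move/eqP; rewrite paddr_eq0 //; by case/andP => /eqP -> /eqP ->.
have tr0 : \tr (R *m (diag_mx s)^t*) = 0.
  rewrite tr_mulE big1 // => j _; rewrite (sum1 (j := j)) => [|k kj]; last first.
    by rewrite !mxE eq_sym (negbTE kj) mulr0n rmorph0 mulr0.
  rewrite [(diag_mx s) j j]mxE eqxx mulr1n hs RE.
  have [e|ne] := eqVneq (p 0 j) 0; first by rewrite (sz _ e) !mulr0.
  rewrite -!sp in ne *; field; by rewrite -mulr2n mulrn_eq0 /=.
have pw : forall j k, R j k * (R j k)^* + R k j * (R k j)^* =
    (p 0 j - p 0 k) ^+ 2 / (p 0 j + p 0 k) * `|K j k| ^+ 2.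
  move=> j k; rewrite !RE normCK.
  have [e|ne] := eqVneq (p 0 j + p 0 k) 0.
    case: (pz _ _ e) => ej ek; rewrite e (sz _ ej) (sz _ ek) !mulr0 !mul0r !addr0 rmorph0 mulr0 invr0 mulr0 mul0r; by rewrite addr0.
  rewrite !rmorphD !rmorphM /= !fmorphV /= !rmorphD !rmorphN /= !rmorph_nat !hs.
  rewrite ?(hKe k j) -?(hKe j k) !hp.
  have ne' : p 0 k + p 0 j != 0 by rewrite addrC.
  rewrite -!sp in ne ne' *; by field.
rewrite tr0 expr0n /= subr0.
have -> : \sum_j \sum_(k | 0 < p 0 j + p 0 k) (p 0 j - p 0 k) ^+ 2 / (p 0 j + p 0 k) * `|K j k| ^+ 2
    = \sum_j \sum_k (R j k * (R j k)^* + R k j * (R k j)^*).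
  apply: eq_bigr => j _; rewrite cond_free // => [|k|k hz].
  - by apply: eq_bigr => k _; rewrite pw.
  - exact: addr_ge0.
  - by rewrite hz invr0 mulr0 mul0r.
under eq_bigr do rewrite big_split /=.
rewrite big_split /= [X in _ + X]exchange_big /= tr_mulE.
ring.
Qed.

End H.

Unset Implicit Arguments.

Lemma adj_delta (C : numClosedFieldType) n (j : 'I_n) :
  (delta_mx j 0 : 'cV[C]_n)^t* = delta_mx 0 j.
Proof. by apply/matrixP => a b; rewrite !mxE rmorph_nat andbC. Qed.

Theorem theorem2 (C : numClosedFieldType) (n : nat) (HS rho : 'M[C]_n) :
  hermitian_op HS -> density rho ->
  (forall (m : nat) (HA : 'M[C]_m) (Phi : 'cV[C]_(n * m)),
      hermitian_op HA -> purification rho Phi ->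
      qfi HS rho <= qfi (Htot HS HA) (proj Phi) /\
      qfi HS rho <= 4 * variance (Htot HS HA) Phi) /\
  (exists (m : nat) (HA : 'M[C]_m) (Phi : 'cV[C]_(n * m)),
      [/\ hermitian_op HA, purification rho Phi,
          qfi HS rho = qfi (Htot HS HA) (proj Phi)
        & qfi HS rho = 4 * variance (Htot HS HA) Phi]).
Proof.
rewrite /hermitian_op => hS [hr psd tr1].
have U := spectral_unitarymx rho.
have nr : rho \is normalmx := hermitian_normalmx hr.
have rE := spec_eq nr.
have Dp := spec_conj nr.
have hK : (spectralmx rho *m HS *m (spectralmx rho)^t*)^t* = spectralmx rho *m HS *m (spectralmx rho)^t*.
  by rewrite !adjM trmxCK (herm_adj hS) mulmxA.
have s1 : \sum_j spectral_diag rho 0 j = 1.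
  rewrite -mxtrace_diag -Dp mxtrace_mulC mulmxA unitary_r // mul1mx.
  exact: tr1.
have p0 : forall j, 0 <= spectral_diag rho 0 j.
  move=> j; have := psd ((spectralmx rho)^t* *m delta_mx j 0).
  rewrite /dag adjM trmxCK adj_delta.
  have -> : (delta_mx 0 j : 'rV[C]_n) *m spectralmx rho *m rho *m ((spectralmx rho)^t* *m (delta_mx j 0 : 'cV[C]_n))
     = (delta_mx 0 j : 'rV[C]_n) *m (spectralmx rho *m rho *m (spectralmx rho)^t*) *m (delta_mx j 0 : 'cV[C]_n).
    by rewrite !mulmxA.
  by rewrite Dp -rowE -colE !mxE eqxx mulr1n.
split.
  move=> m HA Phi hA [hn hpt].
  have eq1 := qfi_pure (Htot_herm hS hA) hn.
  rewrite eq1; suff H : qfi HS rho <= 4 * variance (Htot HS HA) Phi by split.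
  rewrite (var_eigen _ hS hA U).
  have hN : (spectralmx rho *m Mof Phi) *m (spectralmx rho *m Mof Phi)^t*
       = diag_mx (spectral_diag rho).
    by rewrite adjM !mulmxA -[_ *m Mof Phi *m _]mulmxA -ptraceA_proj hpt Dp.
  have hG : (HA^T)^t* = HA^T.
    by apply/matrixP => i j; rewrite !mxE (herm_entry hA).
  exact: (core_lower hN s1 hK hG).
pose p := spectral_diag rho.
pose P := spectralmx rho.
pose sp := \row_j sqrtC (p 0 j).
have spc : forall j, (sp 0 j)^* = sp 0 j.
  by move=> j; rewrite mxE geC0_conj // sqrtC_ge0.
have sp2 : forall j, sp 0 j * sp 0 j = p 0 j by move=> j; rewrite mxE -expr2 sqrtCK.
have pc : forall j, (p 0 j)^* = p 0 j by move=> j; rewrite geC0_conj.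
pose M0 := P^t* *m diag_mx sp.
pose Phi : 'cV[C]_(n * n) := \col_k M0 (idx_pair k).1 (idx_pair k).2.
have MP : Mof Phi = M0.
  by apply/matrixP => i a; rewrite /Mof mxE [Phi _ _]mxE idx_pairK.
pose K := P *m HS *m P^t*.
pose G := Gopt K p sp.
have hA : G^T \is hermsymmx by apply: Gopt_herm.
have dd : diag_mx sp *m (diag_mx sp)^t* = diag_mx p.
  rewrite adj_diag mul_diag_mx; apply/matrixP => i j; rewrite !mxE.
  case: (i == j); last by rewrite !mulr0n mulr0.
  have := spc i; have := sp2 i; rewrite !mxE => h1 h2.
  by rewrite !mulr1n h2 h1.
have MM : M0 *m M0^t* = rho.
  by rewrite /M0 adjM trmxCK !mulmxA -[P^t* *m _ *m _]mulmxA dd rE.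
have pur : purification rho Phi.
  split; last by rewrite ptraceA_proj MP MM.
  by rewrite /ket_normalized /dag dotE MP MM.
have hn : (Phi^t* *m Phi) 0 0 = 1 by case: pur.
have eqV : qfi HS rho = 4 * variance (Htot HS G^T) Phi.
  rewrite (var_eigen _ hS hA U) trmxK MP.
  have -> : P *m M0 = diag_mx sp by rewrite /M0 mulmxA unitary_l // mul1mx.
  exact: (attain hK p0 spc sp2).
exists n, G^T, Phi; split => //.
by rewrite eqV (qfi_pure (Htot_herm hS hA) hn).
Qed.
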